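(* Let $\Lambda$ be a left cancellative small category, $v\in\Lambda^0$, and let $C\subseteq\mathcal D^{(0)}_v$ be a filter. Then $C\in v\Lambda^{**}$ if and only if for every $F\in\mathcal D^{(0)}_v$ such that $F\cap E\ne\varnothing$ for all $E\in C$, there exists $E\in C$ with $E\subseteq F$.
   Context: A left cancellative small category (LCSC) is a small category $\Lambda$ such that $\alpha\beta=\alpha\gamma$ implies $\beta=\gamma$. Composition $\alpha\beta$ is defined when $s(\alpha)=r(\beta)$; $\Lambda^0$ is the set of objects; $v\Lambda=\{\alpha:r(\alpha)=v\}$. For $\alpha\in\Lambda$, $\tau^\alpha(\beta)=\alpha\beta$ on $s(\alpha)\Lambda$ and $\sigma^\alpha:\alpha\Lambda\to s(\alpha)\Lambda$ is its inverse. A zigzag is a tuple $\zeta=(\alpha_1,\beta_1,\dots,\alpha_n,\beta_n)$ with $r(\alpha_i)=r(\beta_i)$ and $s(\alpha_{i+1})=s(\beta_i)$, $s(\zeta)=s(\beta_n)$; the zigzag map $\varphi_\zeta=\sigma^{\alpha_1}\circ\tau^{\beta_1}\circ\cdots\circ\sigma^{\alpha_n}\circ\tau^{\beta_n}$ (partial map) has domain $A(\zeta)\subseteq s(\zeta)\Lambda$. $\mathcal D^{(0)}_v$ is the set of nonempty $A(\zeta)$ with $s(\zeta)=v$ (closed under nonempty intersection). A filter in $\mathcal D^{(0)}_v$ is a nonempty $C\subseteq\mathcal D^{(0)}_v$ closed under intersection and under supersets within $\mathcal D^{(0)}_v$. A finite $\mathcal F\subseteq\mathcal D^{(0)}_v$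 covers the filter $C$ if some $E\in C$ satisfies $E\subseteq\bigcup\mathcal F$. $v\Lambda^*$ is the set of filters $C$ in $\mathcal D^{(0)}_v$ such that every finite $\mathcal F\subseteq\mathcal D^{(0)}_v$ with $\mathcal F\cap C=\varnothing$ does not cover $C$. $v\Lambda^{**}$ is the set of maximal elements of $v\Lambda^*$ with respect to inclusion. *)

(* Defs.v *)
From Stdlib Require Import List.
Import ListNotations.

(* Composition is a total function whose
   values are only constrained (and only ever used) when [src a = rng b];
   all axioms are guarded accordingly. *)
Record LCSC := {
  Obj : Type;
  Mor : Type;
  rng : Mor -> Obj;
  src : Mor -> Obj;
  idm : Obj -> Mor;
  comp : Mor -> Mor -> Mor;
  rng_idm : forall v, rng (idm v) = v;
  src_idm : forall v, src (idm v) = v;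
  rng_comp : forall a b, src a = rng b -> rng (comp a b) = rng a;
  src_comp : forall a b, src a = rng b -> src (comp a b) = src b;
  comp_idl : forall a, comp (idm (rng a)) a = a;
  comp_idr : forall a, comp a (idm (src a)) = a;
  comp_assoc : forall a b c, src a = rng b -> src b = rng c ->
      comp a (comp b c) = comp (comp a b) c;
  left_cancel : forall a b c, src a = rng b -> src a = rng c ->
      comp a b = comp a c -> b = c
}.

Arguments rng {l}. Arguments src {l}. Arguments idm {l}. Arguments comp {l}.

Section Zigzag.
Variable L : LCSC.

(* A zigzag (a_1,b_1,...,a_n,b_n), n >= 1, stored as the list of pairs
   [(a_1,b_1); ...; (a_n,b_n)], with source s(zeta) = v. *)
Fixpoint zz_ok (l : list (Mor L * Mor L)) (v : Obj L) : Prop :=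
  match l with
  | [] => False
  | p :: rest =>
      rng (fst p) = rng (snd p) /\
      match rest with
      | [] => src (snd p) = v
      | q :: _ => src (fst q) = src (snd p) /\ zz_ok rest v
      end
  end.

(* Graph of the partial zigzag map
   phi = sigma^{a_1} o tau^{b_1} o ... o sigma^{a_n} o tau^{b_n}:
   zz_graph l x y  means  phi_l(x) is defined and equals y. *)
Fixpoint zz_graph (l : list (Mor L * Mor L)) (x y : Mor L) : Prop :=
  match l with
  | [] => x = y
  | p :: rest =>
      exists z, zz_graph rest x z /\ src (snd p) = rng z /\
                src (fst p) = rng y /\ comp (snd p) z = comp (fst p) y
  end.

Definition zz_dom (l : list (Mor L * Mor L)) (v : Obj L) : Mor L -> Prop :=
  fun x => rng x = v /\ exists y, zz_graph l x y.

Definition D0 (v : Obj L) (E : Mor L -> Prop) : Prop :=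
  (exists l, zz_ok l v /\ forall x, E x <-> zz_dom l v x) /\ (exists x, E x).

Definition subset (E F : Mor L -> Prop) : Prop := forall x, E x -> F x.

Definition is_filter (v : Obj L) (C : (Mor L -> Prop) -> Prop) : Prop :=
  (exists E, C E) /\
  (forall E, C E -> D0 v E) /\
  (forall E F, C E -> C F -> C (fun x => E x /\ F x)) /\
  (forall E F, C E -> D0 v F -> subset E F -> C F).

Definition covers (Fs : list (Mor L -> Prop)) (C : (Mor L -> Prop) -> Prop) : Prop :=
  exists E, C E /\ forall x, E x -> exists F, In F Fs /\ F x.

Definition in_star (v : Obj L) (C : (Mor L -> Prop) -> Prop) : Prop :=
  is_filter v C /\
  forall Fs : list (Mor L -> Prop),
    (forall F, In F Fs -> D0 v F) ->
    (forall F, In F Fs -> ~ C F) ->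
    ~ covers Fs C.

Definition in_star2 (v : Obj L) (C : (Mor L -> Prop) -> Prop) : Prop :=
  in_star v C /\
  forall C', in_star v C' -> (forall E, C E -> C' E) -> (forall E, C' E -> C E).

End Zigzag.

Arguments zz_ok {L}. Arguments zz_graph {L}. Arguments zz_dom {L}.
Arguments D0 {L}. Arguments subset {L}. Arguments is_filter {L}.
Arguments covers {L}. Arguments in_star {L}. Arguments in_star2 {L}.

(* Main.v *)
Require Import Defs.
From Stdlib Require Import List.
From Stdlib Require Import Classical FunctionalExtensionality PropExtensionality.
From mathcomp Require classical_sets.
Import ListNotations.

Lemma my_zorn (T:Type) (P : (T->Prop) -> Prop) :
 (forall F : (T->Prop)->Prop, (forall X, F X -> P X) ->
   (forall X Y, F X -> F Y -> (forall t, X t -> Y t) \/ (forall t, Y t -> X t)) ->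
   P (fun t => exists X, F X /\ X t)) ->
 exists A, P A /\ forall B, (forall t, A t -> B t) -> P B -> forall t, B t -> A t.
Proof.
  intros H. destruct (@classical_sets.Zorn_bigcup T P) as [A [PA HA]].
  - intros F FP Ftot.
    assert (E : classical_sets.bigcup F (fun X => X) = (fun t => exists X, F X /\ X t)).
    { apply functional_extensionality; intro t; apply propositional_extensionality.
      unfold classical_sets.bigcup, classical_sets.mkset; split.
      - intros [X FX Xt]; eauto.
      - intros [X [FX Xt]]; econstructor; eauto. }
    rewrite E. apply H; [exact FP|]. intros X Y FX FY. exact (Ftot X Y FX FY).
  - exists A. split; [exact PA|]. intros B AB PB t Bt. apply NNPP; intro nAt.
    apply (HA B); [split; [exact AB| intro BA; exact (nAt (BA t Bt))] | exact PB].
Qed.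

Section S.
Variable L : LCSC.

Fixpoint rev_zz (l : list (Mor L * Mor L)) : list (Mor L * Mor L) :=
  match l with
  | [] => []
  | p :: r => rev_zz r ++ [(snd p, fst p)]
  end.

Lemma graph_app (l1 l2 : list (Mor L * Mor L)) x y :
  zz_graph (l1 ++ l2) x y <-> exists z, zz_graph l2 x z /\ zz_graph l1 z y.
Proof.
  revert y; induction l1 as [|p l1 IH]; intro y; simpl.
  - split; [intro; exists y; auto | intros [z [H1 H2]]; subst; auto].
  - split.
    + intros [z [Hz C]]. apply IH in Hz. destruct Hz as [w [H1 H2]].
      exists w; split; [auto| exists z; auto].
    + intros [w [H1 [z [H2 C]]]]. exists z; split; [apply IH; exists w; auto| auto].
Qed.

Lemma graph_rev (l : list (Mor L * Mor L)) x y :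
  zz_graph (rev_zz l) y x <-> zz_graph l x y.
Proof.
  revert x y; induction l as [|p l IH]; intros x y; simpl.
  - split; intro; subst; auto.
  - rewrite graph_app. split.
    + intros [z [[z' [E [H1 [H2 H3]]]] Hz]]. simpl in E. subst z'.
      exists z. split; [apply IH; auto|]. split; [auto|]. split; auto.
    + intros [z [Hz [H1 [H2 H3]]]]. exists z. split; [|apply IH; auto].
      exists y. simpl. auto.
Qed.

Lemma graph_inj (l : list (Mor L * Mor L)) x w y :
  zz_graph l x y -> zz_graph l w y -> x = w.
Proof.
  revert x w y; induction l as [|p l IH]; intros x w y; simpl.
  - intros; subst; auto.
  - intros [z [Hz [H1 [H2 H3]]]] [z' [Hz' [H1' [H2' H3']]]].
    assert (z = z').
    { apply (left_cancel L (snd p)); auto. congruence. }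
    subst z'. eapply IH; eauto.
Qed.

Lemma ok_app (l1 : list (Mor L * Mor L)) w q l2 v :
  zz_ok l1 w -> zz_ok (q :: l2) v -> src (fst q) = w -> zz_ok (l1 ++ q :: l2) v.
Proof.
  revert w; induction l1 as [|p l1 IH]; intros w H1 H2 H3; simpl in *.
  - contradiction.
  - destruct l1 as [|p' l1'].
    + simpl. destruct H1 as [A B]. split; auto. split; [congruence| exact H2].
    + destruct H1 as [A [B C]]. split; auto. simpl. split; auto.
      specialize (IH w C H2 H3). simpl in IH. exact IH.
Qed.

Lemma ok_rev (l : list (Mor L * Mor L)) p v :
  zz_ok (p :: l) v -> zz_ok (rev_zz (p :: l)) (src (fst p)).
Proof.
  revert p; induction l as [|q l IH]; intros p H.
  - simpl in *. destruct H as [A B]. split; auto.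
  - simpl rev_zz. simpl in H. destruct H as [A [B C]].
    apply IH in C. simpl rev_zz in C.
    apply (ok_app _ (src (fst q))); [exact C| |].
    + simpl. split; auto.
    + simpl. congruence.
Qed.

Lemma rev_head (l : list (Mor L * Mor L)) v :
  zz_ok l v -> exists q r, rev_zz l = q :: r /\ src (fst q) = v.
Proof.
  induction l as [|p l IH]; intro H; simpl in H.
  - contradiction.
  - destruct l as [|p' l'].
    + simpl. exists (snd p, fst p), []. simpl. split; auto. apply H.
    + destruct H as [A [B C]]. destruct (IH C) as [q [r [E F]]].
      simpl rev_zz. simpl rev_zz in E. rewrite E. exists q, (r ++ [(snd p, fst p)]).
      split; auto.
Qed.

Lemma ok_double (l : list (Mor L * Mor L)) v :
  zz_ok l v -> zz_ok (rev_zz l ++ l) v /\ exists q r, rev_zz l ++ l = q :: r /\ src (fst q) = v.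
Proof.
  intro H. destruct l as [|p l]; [simpl in H; contradiction|]. split.
  - apply (ok_app _ (src (fst p))); auto. eapply ok_rev; eauto.
  - destruct (rev_head _ _ H) as [q [r [E F]]]. rewrite E. exists q, (r ++ p :: l). auto.
Qed.

Lemma D0_inter (v : Obj L) (E F : Mor L -> Prop) :
  D0 v E -> D0 v F -> (exists x, E x /\ F x) -> D0 v (fun x => E x /\ F x).
Proof.
  intros [[l1 [ok1 H1]] _] [[l2 [ok2 H2]] _] ne. split; [|exact ne].
  exists ((rev_zz l1 ++ l1) ++ (rev_zz l2 ++ l2)). split.
  - destruct (ok_double _ _ ok1) as [o1 _]. destruct (ok_double _ _ ok2) as [o2 [q [r [Eq Sq]]]].
    rewrite Eq. apply (ok_app _ v); auto. rewrite <- Eq; auto.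
  - intro x. rewrite H1, H2. unfold zz_dom. split.
    + intros [[R1 [y1 G1]] [R2 [y2 G2]]]. split; auto. exists x.
      apply graph_app. exists x. split; apply graph_app.
      * exists y2. split; auto. apply graph_rev; auto.
      * exists y1. split; auto. apply graph_rev; auto.
    + intros [R [y G]]. apply graph_app in G. destruct G as [z [G2 G1]].
      apply graph_app in G2. destruct G2 as [u [G2 G2']]. apply (proj1 (graph_rev _ _ _)) in G2'.
      pose proof (graph_inj _ _ _ _ G2 G2'). subst z.
      apply graph_app in G1. destruct G1 as [u' [G1 _]].
      split; split; eauto.
Qed.

Variable v : Obj L.

Lemma ext_filter (U : (Mor L -> Prop) -> Prop) (H : Mor L -> Prop) :
  is_filter v U -> D0 v H -> (forall E, U E -> exists x, H x /\ E x) ->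
  is_filter v (fun G => D0 v G /\ exists E, U E /\ forall x, E x -> H x -> G x).
Proof.
  intros [[E0 UE0] [d0 [inter up]]] DH meet.
  split; [|split; [|split]].
  - exists H. split; auto. exists E0. auto.
  - intros G [DG _]; exact DG.
  - intros G1 G2 [D1 [E1 [U1 S1]]] [D2 [E2 [U2 S2]]].
    pose proof (inter _ _ U1 U2) as U12.
    destruct (meet _ U12) as [x [Hx [E1x E2x]]].
    split.
    + apply D0_inter; auto. exists x; split; auto.
    + exists (fun x => E1 x /\ E2 x). split; auto. intros y [a b] c; split; auto.
  - intros G1 G2 [D1 [E1 [U1 S1]]] D2 S. split; auto. exists E1. split; auto.
Qed.

Lemma ultra_star (U : (Mor L -> Prop) -> Prop) :
  is_filter v U ->
  (forall H, D0 v H -> (forall E, U E -> exists x, H x /\ E x) -> U H) ->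
  in_star v U.
Proof.
  intros FU ultra. split; [exact FU|].
  destruct FU as [ne [d0 [inter up]]].
  intros Fs DFs nFs [E0 [UE0 cov]].
  revert E0 UE0 cov. induction Fs as [|F Fs IH]; intros E0 UE0 cov.
  - destruct (d0 _ UE0) as [_ [x Ex]]. destruct (cov x Ex) as [F [[] _]].
  - assert (exists E1, U E1 /\ forall x, ~ (F x /\ E1 x)) as [E1 [U1 D1]].
    { apply NNPP; intro N. apply (nFs F (or_introl eq_refl)).
      apply ultra; [apply DFs; left; auto|].
      intros E UE. apply NNPP; intro N2. apply N. exists E. split; auto.
      intros x Hx. apply N2; eauto. }
    apply (IH (fun F' I => DFs F' (or_intror I)) (fun F' I => nFs F' (or_intror I))
             (fun x => E0 x /\ E1 x) (inter _ _ UE0 U1)).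
    intros x [a b]. destruct (cov x a) as [F' [[e|I] F'x]].
    + subst F'. exfalso. apply (D1 x); auto.
    + eauto.
Qed.

End S.

Theorem mainTheorem11 (L : LCSC) (v : Obj L) (C : (Mor L -> Prop) -> Prop) :
  is_filter v C ->
  (in_star2 v C <->
   (forall F : Mor L -> Prop, D0 v F ->
      (forall E, C E -> exists x, F x /\ E x) ->
      exists E, C E /\ subset E F)).
Proof.
  intro FC. split.
  - intros [Cst Cmax] F DF meet.
    set (C' := fun G => D0 v G /\ exists E, C E /\ forall x, E x -> F x -> G x).
    assert (FC' : is_filter v C') by (apply ext_filter; auto).
    set (P := fun U : (Mor L -> Prop) -> Prop =>
      (forall E, U E -> D0 v E) /\ (forall E G, U E -> U G -> U (fun x => E x /\ G x)) /\
      (forall E G, U E -> D0 v G -> subset E G -> U G) /\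
      ((forall E, C' E -> U E) \/ forall E, ~ U E)).
    destruct (my_zorn _ P) as [A [PA Amax]].
    + intros Fm FP tot. split; [|split; [|split]].
      * intros E [X [FX XE]]. apply (FP X FX); auto.
      * intros E G [X [FX XE]] [Y [FY YG]]. destruct (tot X Y FX FY) as [S|S].
        -- exists Y. split; auto. apply (FP Y FY); auto.
        -- exists X. split; auto. apply (FP X FX); auto.
      * intros E G [X [FX XE]] DG S. exists X. split; auto. apply (FP X FX) with E; auto.
      * destruct (classic (exists X, Fm X /\ forall E, C' E -> X E)) as [[X [FX S]]|N].
        -- left. intros E CE. exists X. auto.
        -- right. intros E [X [FX XE]]. destruct (FP X FX) as [_ [_ [_ [S|S]]]].
           ++ apply N; eauto.
           ++ exact (S E XE).
    + destruct FC' as [neC' [d0C' [interC' upC']]].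
      assert (PC' : P C') by (split; [|split; [|split]]; auto).
      assert (C'A : forall E, C' E -> A E).
      { destruct PA as [_ [_ [_ [S|S]]]]; auto.
        intros E CE. apply (Amax C'); auto. intros t At; exfalso; exact (S t At). }
      destruct PA as [d0A [interA [upA _]]].
      assert (FA : is_filter v A).
      { split; [|split; [|split]]; auto. destruct neC' as [E CE]. eauto. }
      assert (CC' : forall E, C E -> C' E).
      { intros E CE. split; [apply FC; auto|]. exists E. auto. }
      assert (AC : forall E, A E -> C E).
      { apply Cmax; [|intros; apply C'A, CC'; auto].
        apply ultra_star; auto. intros H DH meetH.
        pose proof (ext_filter L v A H FA DH meetH) as FA'.
        destruct FA' as [ne' [d0' [inter' up']]].
        apply (Amax (fun G => D0 v G /\ exists E, A E /\ forall x, E x -> H x -> G x)).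
        - intros E AE. split; auto. exists E. auto.
        - split; [|split; [|split]]; auto. left. intros E CE. split; auto.
          exists E. split; auto.
        - split; auto. destruct ne' as [E [_ [E' [AE' _]]]]. exists E'. split; auto. }
      exists F. split; [|intros x; auto]. apply AC, C'A. split; auto.
      destruct FC as [[E CE] _]. exists E. auto.
  - intro Q. destruct FC as [ne [d0 [inter up]]] eqn:HFC.
    split.
    + apply ultra_star; auto. intros H DH meetH. destruct (Q H DH meetH) as [E [CE S]].
      apply (up E); auto.
    + intros C' [[ne' [d0' [inter' up']]] _] CC' E' C'E'.
      destruct (Q E' (d0' _ C'E')) as [E [CE S]].
      * intros E CE. destruct (d0' _ (inter' _ _ C'E' (CC' _ CE))) as [_ [x [a b]]].
        exists x; auto.
      * apply (up E); auto.
Qed.
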